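(* Let $D>0$ be a square-free integer. Let $z_1=\frac{a_1+b_1\sqrt{-D}}{c_1}$ and $z_2=\frac{a_2+b_2\sqrt{-D}}{c_2}$ be elements of $G_D(\mathbb{Q})$ with $a_i,b_i\in\mathbb{Z}$, $c_i$ positive integers, and $\gcd(a_1,b_1)=\gcd(a_2,b_2)=\gcd(c_1,c_2)=1$. Then $(a_1a_2-Db_1b_2)^2+D(a_1b_2+a_2b_1)^2=(c_1c_2)^2$, and $a_1a_2-Db_1b_2$ and $a_1b_2+a_2b_1$ are coprime; i.e. $(a_1a_2-Db_1b_2,\ a_1b_2+a_2b_1,\ c_1c_2)$ is a normalized solution (up to signs of the first two entries).
   Context: $G_D(\mathbb{Q}):=\{a+b\sqrt{-D}\in\mathbb{Q}[\sqrt{-D}]: a^2+Db^2=1\}$. A normalized solution of $x^2+Dy^2=z^2$ is a triple $(a,b,c)$ of natural numbers with $a^2+Db^2=c^2$ and $\gcd(a,b,c)=1$. *)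

(* Defs.v *)
From mathcomp Require Import all_boot all_order all_algebra.
Set Implicit Arguments. Unset Strict Implicit. Unset Printing Implicit Defensive.
Import Order.TTheory GRing.Theory Num.Theory.
Local Open Scope ring_scope.

Definition squarefree (n : nat) : Prop :=
  forall d : nat, (d * d %| n)%N -> d = 1%N.

(* Elements of Q[sqrt(-D)] are represented by their coordinates (x, y),
   standing for x + y * sqrt(-D).  G_D(Q) = { x + y sqrt(-D) : x^2 + D y^2 = 1 }. *)
Definition G_D (D : nat) : pred (rat * rat) :=
  fun z => z.1 ^+ 2 + D%:R * z.2 ^+ 2 == 1.

(* Main.v *)
Require Import Defs.
From mathcomp Require Import all_boot all_order all_algebra.
From mathcomp Require Import ring.
Import Order.TTheory GRing.Theory Num.Theory.
Local Open Scope ring_scope.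

Lemma GD_eq (D : nat) (a b c : int) : 0 < c ->
  ((a%:~R / c%:~R : rat), (b%:~R / c%:~R : rat)) \in G_D D ->
  c ^+ 2 = a ^+ 2 + D%:Z * b ^+ 2.
Proof.
move=> c0; rewrite unfold_in /G_D /= => /eqP H.
have cq : (c%:~R : rat) != 0 by rewrite intr_eq0 gt_eqF.
have K : (c%:~R:rat)^+2 * ((a%:~R / c%:~R) ^+ 2 + D%:R * (b%:~R / c%:~R) ^+ 2)
     = a%:~R^+2 + D%:R * b%:~R^+2 by field.
rewrite H mulr1 in K.
apply: (@intr_inj rat).
rewrite rmorphD !rmorphM /= -pmulrn -!expr2; exact: K.
Qed.

Theorem lemma3p7 (D : nat) (a1 b1 c1 a2 b2 c2 : int) :
  (0 < D)%N -> squarefree D ->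
  0 < c1 -> 0 < c2 ->
  ((a1%:~R / c1%:~R : rat), (b1%:~R / c1%:~R : rat)) \in G_D D ->
  ((a2%:~R / c2%:~R : rat), (b2%:~R / c2%:~R : rat)) \in G_D D ->
  coprimez a1 b1 -> coprimez a2 b2 -> coprimez c1 c2 ->
  (a1 * a2 - D%:Z * b1 * b2) ^+ 2 + D%:Z * (a1 * b2 + a2 * b1) ^+ 2 = (c1 * c2) ^+ 2
  /\ coprimez (a1 * a2 - D%:Z * b1 * b2) (a1 * b2 + a2 * b1).
Proof.
move=> _ _ c10 c20 G1 G2 cp1 cp2 cp12.
have E1 := @GD_eq D a1 b1 c1 c10 G1; have E2 := @GD_eq D a2 b2 c2 c20 G2.
split; first by rewrite exprMn E1 E2; ring.
case/coprimezP: cp1 => [[u1 v1] /= B1].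
case/coprimezP: cp2 => [[u2 v2] /= B2].
case/coprimezP: cp12 => [[s t] /= B3].
set X := a1 * a2 - D%:Z * b1 * b2; set Y := a1 * b2 + a2 * b1.
have h1 : c1 ^+ 2 = (u2*a1 - v2*b1) * X + (u2*D%:Z*b1 + v2*a1) * Y.
  have -> : c1 ^+ 2 = (u2*a2+v2*b2)*(a1^+2+D%:Z*b1^+2) by rewrite B2 mul1r E1.
  rewrite /X /Y; ring.
have h2 : c2 ^+ 2 = (u1*a2 - v1*b2) * X + (u1*D%:Z*b2 + v1*a2) * Y.
  have -> : c2 ^+ 2 = (u1*a1+v1*b1)*(a2^+2+D%:Z*b2^+2) by rewrite B1 mul1r E2.
  rewrite /X /Y; ring.
have h3 : 1 = c1 ^+ 2 * (s^+3 * c1 + 3 * s^+2 * t * c2)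
            + c2 ^+ 2 * (3 * s * t^+2 * c1 + t^+3 * c2).
  have e : (s * c1 + t * c2) ^+ 3 = 1 by rewrite B3 expr1n.
  apply: etrans (esym e) _; ring.
apply/coprimezP.
exists ((s^+3 * c1 + 3 * s^+2 * t * c2) * (u2*a1 - v2*b1)
        + (3 * s * t^+2 * c1 + t^+3 * c2) * (u1*a2 - v1*b2),
        (s^+3 * c1 + 3 * s^+2 * t * c2) * (u2*D%:Z*b1 + v2*a1)
        + (3 * s * t^+2 * c1 + t^+3 * c2) * (u1*D%:Z*b2 + v1*a2)) => /=.
rewrite [RHS]h3 h1 h2; ring.
Qed.
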